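(* Let $d$ be an odd prime and $n\ge1$. Let $P=Z_1^{a_1}X_1^{b_1}\cdots Z_n^{a_n}X_n^{b_n}$ and $Q=Z_1^{c_1}X_1^{e_1}\cdots Z_n^{c_n}X_n^{e_n}$ be elements of $\mathcal{P}_d^n$ with $(P,Q)=\sum_{i=1}^n(a_ie_i-b_ic_i)=1$ in $\mathbb{Z}_d$. Then there exists a circuit $M$ built from the gates $C_X$, $F$, $S$ such that, for some exponents $a'_i,b'_i,c'_i,e'_i\in\mathbb{Z}_d$ and complex scalars $\lambda,\mu$, $$MPM^{-1}=\lambda Z_1^{a'_1}X_1^{b'_1}\cdots Z_n^{a'_n}X_n^{b'_n},\qquad MQM^{-1}=\mu Z_1^{c'_1}X_1^{e'_1}\cdots Z_n^{c'_n}X_n^{e'_n},$$ and there exists $j\in\{1,\dots,n\}$ with $a'_je'_j-b'_jc'_j=1$ in $\mathbb{Z}_d$.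
   Context: $\omega=e^{2\pi i/d}$; $X|j\rangle=|j+1\bmod d\rangle$, $Z|j\rangle=\omega^j|j\rangle$, $F|j\rangle=\frac1{\sqrt d}\sum_m\omega^{jm}|m\rangle$, $S|j\rangle=\omega^{j(j+1)/2}|j\rangle$, $C_X|j\rangle|k\rangle=|j\rangle|j+k\bmod d\rangle$. Subscript $i$ on $X_i,Z_i$ means the operator acts on qudit $i$. $\mathcal{P}_d^n$ is the group of operators $\omega^kZ_1^{a_1}X_1^{b_1}\cdots Z_n^{a_n}X_n^{b_n}$. A circuit built from a gate set is a finite product of gates from the set, one-qudit gates on any qudit, two-qudit gates on any ordered pair of distinct qudits. *)

(* Defs.v *)
From HB Require Import structures.
From mathcomp Require Import all_boot all_order all_algebra all_field.
Set Implicit Arguments. Unset Strict Implicit. Unset Printing Implicit Defensive.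
Import Order.TTheory GRing.Theory Num.Theory.
Local Open Scope ring_scope.

(* omega = e^{2 pi i / d}: d.-root (-1) is e^{i pi / d} (minimal argument). *)
Definition omega (d : nat) : algC := (d.-root (-1)) ^+ 2.

(* computational basis of n qudits: |x>, x : 'I_n -> Z_d *)
Definition basis (n d : nat) := {ffun 'I_n -> 'Z_d}.

(* operators on (C^d)^{\otimes n}, as matrices indexed by an enumeration of the basis *)
Definition Op (n d : nat) := 'M[algC]_#|basis n d|.

Definition opm n d (f : basis n d -> basis n d -> algC) : Op n d :=
  \matrix_(r, c) f (enum_val r) (enum_val c).

Definition upd n d (x : basis n d) (k : 'I_n) (v : 'Z_d) : basis n d :=
  [ffun l => if l == k then v else x l].

Definition Xq n d (i : 'I_n) : Op n d :=
  opm (fun y x => (y == upd x i (x i + 1)%R)%:R).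
Definition Zq n d (i : 'I_n) : Op n d :=
  opm (fun y x => (y == x)%:R * omega d ^+ (x i : nat)).
(* F|j> = d^{-1/2} sum_m omega^{jm} |m> on qudit i *)
Definition Fq n d (i : 'I_n) : Op n d :=
  opm (fun y x => [forall k, (k != i) ==> (y k == x k)]%:R
                  * (sqrtC (d%:R))^-1 * omega d ^+ ((x i : nat) * (y i : nat))).
Definition Sq n d (i : 'I_n) : Op n d :=
  opm (fun y x => (y == x)%:R * omega d ^+ (((x i : nat) * (x i).+1)./2)).
(* C_X with control i, target k: |j>_i|l>_k -> |j>_i|j+l>_k *)
Definition CXq n d (i k : 'I_n) : Op n d :=
  opm (fun y x => (y == upd x k (x i + x k)%R)%:R).

Inductive gate (n : nat) : Type :=
| GF of 'I_n
| GS of 'I_n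
| GCX (i k : 'I_n) of i != k.

Definition gate_mx n d (g : gate n) : Op n d :=
  match g with
  | GF i => Fq d i
  | GS i => Sq d i
  | @GCX _ i k _ => CXq d i k
  end.

Definition circuit_mx n d (s : seq (gate n)) : Op n d :=
  \prod_(g <- s) gate_mx d g.

Definition pauli n d (a b : 'I_n -> 'Z_d) : Op n d :=
  \prod_(i < n) (Zq d i ^+ (a i : nat) * Xq d i ^+ (b i : nat)).

(* Main.v *)
Require Import Defs.
From HB Require Import structures.
From mathcomp Require Import all_boot all_order all_algebra all_field.
From mathcomp Require Import ring.
Set Implicit Arguments. Unset Strict Implicit. Unset Printing Implicit Defensive.
Import Order.TTheory GRing.Theory Num.Theory.
Local Open Scope ring_scope.

Lemma omega_d d : (0 < d)%N -> omega d ^+ d = 1.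
Proof.
move=> d0; rewrite /omega -exprM mulnC exprM rootCK //.
by rewrite expr2 mulN1r opprK.
Qed.

Lemma omega_mod d N : (0 < d)%N -> omega d ^+ N = omega d ^+ (N %% d).
Proof.
move=> d0; rewrite {1}(divn_eq N d) exprD mulnC exprM omega_d // expr1n mul1r.
by [].
Qed.

Definition w d (t : 'Z_d) : algC := omega d ^+ (nat_of_ord t).

Lemma w_nat d N : (1 < d)%N -> omega d ^+ N = w (N%:R : 'Z_d).
Proof. by move=> d1; rewrite /w val_Zp_nat // -omega_mod // ltnW. Qed.

Lemma wD d (s t : 'Z_d) : (1 < d)%N -> w (s + t) = w s * w t.
Proof.
move=> d1; have := w_nat (s + t)%N d1; rewrite natrD !natr_Zp => <-.
exact: exprD.
Qed.

Lemma w0 d : w (0 : 'Z_d) = 1.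
Proof. by rewrite /w expr0. Qed.

Lemma omega_neq0 d : (0 < d)%N -> omega d != 0.
Proof.
move=> d0; apply/eqP=> H; have := omega_d d0; rewrite H expr0n.
by move/eqP; rewrite gtn_eqF //= eq_sym oner_eq0.
Qed.

Lemma w_neq0 d (t : 'Z_d) : (0 < d)%N -> w t != 0.
Proof. by move=> d0; rewrite /w expf_neq0 // omega_neq0. Qed.

Definition mono n d (s : basis n d -> basis n d) (f : basis n d -> algC) : Op n d :=
  opm (fun y x => (y == s x)%:R * f x).

Lemma monoE n d s f (r c : 'I_#|basis n d|) :
  @mono n d s f r c = (enum_val r == s (enum_val c))%:R * f (enum_val c).
Proof. by rewrite /mono /opm mxE. Qed.

Lemma mono_ext n d s s' f f' : s =1 s' -> f =1 f' -> @mono n d s f = mono s' f'.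
Proof. by move=> Hs Hf; apply/matrixP=> r c; rewrite !monoE Hs Hf. Qed.

Lemma monoM n d s f s' f' :
  @mono n d s f * mono s' f' = mono (s \o s') (fun x => f (s' x) * f' x).
Proof.
apply/matrixP=> r c; rewrite mxE monoE.
rewrite (bigD1 (enum_rank (s' (enum_val c)))) //= !monoE enum_rankK eqxx mul1r.
rewrite big1 ?addr0; first by rewrite mulrA.
move=> j Hj; rewrite !monoE.
have -> : (enum_val j == s' (enum_val c)) = false.
  by apply/negbTE; apply: contra Hj => /eqP <-; rewrite enum_valK.
by rewrite mul0r mulr0.
Qed.

Lemma scale_mono n d s f (l : algC) : l *: @mono n d s f = mono s (fun x => l * f x).
Proof. by apply/matrixP=> r c; rewrite mxE !monoE mulrCA. Qed.

Lemma mono1 n d : @mono n d id (fun _ => 1) = 1.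
Proof.
apply/matrixP=> r c; rewrite monoE mxE mulr1.
by rewrite (inj_eq enum_val_inj).
Qed.

Lemma mono_unit n d s t f : cancel s t -> cancel t s -> (forall x, f x != 0) ->
  @mono n d s f \in unitmx.
Proof.
move=> st ts fn0.
have H : mono s f * mono t (fun x => (f (t x))^-1) = 1.
  rewrite monoM -mono1; apply: mono_ext => x /=; first exact: ts.
  by rewrite divff.
by case: (mulmx1_unit H).
Qed.

Lemma updE n d (x : basis n d) i v l : upd x i v l = if l == i then v else x l.
Proof. by rewrite /upd ffunE. Qed.

Lemma Xq_mono n d i : Xq d i = @mono n d (fun x => upd x i (x i + 1)) (fun _ => 1).
Proof. by apply/matrixP=> r c; rewrite monoE /Xq /opm mxE mulr1. Qed.

Lemma Zq_mono n d i : Zq d i = @mono n d id (fun x => w (x i)).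
Proof. by []. Qed.

Lemma Sq_mono n d i : Sq d i = @mono n d id (fun x => omega d ^+ (((x i : nat) * (x i).+1)./2)).
Proof. by []. Qed.

Lemma CXq_mono n d i k : CXq d i k = @mono n d (fun x => upd x k (x i + x k)) (fun _ => 1).
Proof. by apply/matrixP=> r c; rewrite monoE /CXq /opm mxE mulr1. Qed.

Lemma mono_id_exp n d f m : (@mono n d id f) ^+ m = mono id (fun x => f x ^+ m).
Proof.
elim: m => [|m IH]; first by rewrite expr0 -mono1; apply: mono_ext => x.
by rewrite exprS IH monoM; apply: mono_ext => x //=; rewrite exprS.
Qed.

Lemma mono_perm_exp n d s m : (@mono n d s (fun _ => 1)) ^+ m = mono (iter m s) (fun _ => 1).
Proof.
elim: m => [|m IH]; first by rewrite expr0 -mono1; apply: mono_ext => x.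
by rewrite exprS IH monoM; apply: mono_ext => x //=; rewrite mulr1.
Qed.

Lemma iter_shift n d (i : 'I_n) m (x : basis n d) :
  iter m (fun x => upd x i (x i + 1)) x = upd x i (x i + m%:R).
Proof.
elim: m => [|m IH] /=.
  by apply/ffunP => l; rewrite updE addr0; case: eqP => // ->.
rewrite IH; apply/ffunP => l; rewrite !updE eqxx.
by case: eqP => // _; rewrite -addrA -natr1.
Qed.

Lemma w_exp d (t : 'Z_d) m : (1 < d)%N -> w t ^+ m = w (t * m%:R).
Proof.
move=> d1; rewrite /w -exprM w_nat // natrM natr_Zp //.
Qed.

Lemma factor_mono n d (Hd : (1 < d)%N) (i : 'I_n) (a b : 'Z_d) :
  Zq d i ^+ a * Xq d i ^+ b =
  @mono n d (fun x => upd x i (x i + b)) (fun x => w (a * (x i + b))).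
Proof.
rewrite Zq_mono Xq_mono mono_id_exp mono_perm_exp monoM.
apply: mono_ext => x /=; first by rewrite iter_shift natr_Zp.
by rewrite mulr1 iter_shift natr_Zp updE eqxx w_exp // natr_Zp mulrC.
Qed.

Definition shiftv n d (r : seq 'I_n) (b : 'I_n -> 'Z_d) (x : basis n d) : basis n d :=
  [ffun l => if l \in r then x l + b l else x l].

Lemma prod_mono n d (Hd : (1 < d)%N) (a b : 'I_n -> 'Z_d) (r : seq 'I_n) : uniq r ->
  \prod_(i <- r) (Zq d i ^+ a i * Xq d i ^+ b i) =
  @mono n d (shiftv r b) (fun x => w (\sum_(l <- r) a l * (x l + b l))).
Proof.
elim: r => [|j r IH] /=.
  move=> _; rewrite big_nil -mono1; apply: mono_ext => x /=.
    by apply/ffunP => l; rewrite ffunE.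
  by rewrite big_nil w0.
case/andP => jr ur; rewrite big_cons IH // factor_mono // monoM.
apply: mono_ext => x /=.
  apply/ffunP => l; rewrite updE !ffunE in_cons.
  by case: eqP => [->|] //=; rewrite (negbTE jr).
by rewrite big_cons wD // ffunE (negbTE jr).
Qed.

Lemma pauli_mono n d (Hd : (1 < d)%N) (a b : 'I_n -> 'Z_d) :
  pauli a b = @mono n d (fun x => [ffun l => x l + b l])
                        (fun x => w (\sum_(l < n) a l * (x l + b l))).
Proof.
rewrite /pauli prod_mono ?index_enum_uniq //; apply: mono_ext => x //.
by apply/ffunP => l; rewrite !ffunE mem_index_enum.
Qed.

Lemma unit2 d : (1 < d)%N -> odd d -> (2%:R : 'Z_d) \is a GRing.unit.
Proof. by move=> d1 od; rewrite unitZpE // coprime_sym coprime2n. Qed.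

Lemma half_w d (Hd : (1 < d)%N) (od : odd d) (u : 'Z_d) :
  omega d ^+ (((u : nat) * (u : nat).+1)./2) = w (u * (u + 1) / 2%:R).
Proof.
rewrite w_nat //; congr w.
apply: (canRL (mulrK (unit2 Hd od))).
rewrite -natrM muln2 even_halfK; last by rewrite oddM /= andbN.
by rewrite natrM -natr1 natr_Zp.
Qed.

Lemma sum_delta n (R : nmodType) (F : 'I_n -> R) i :
  \sum_(l < n) (if l == i then F l else 0) = F i.
Proof. by rewrite (bigD1 i) //= eqxx big1 ?addr0 // => l /negbTE ->. Qed.

Definition actS n d (i : 'I_n) (v : ('I_n -> 'Z_d) * ('I_n -> 'Z_d)) :=
  (fun l => if l == i then v.1 l + v.2 l else v.1 l, v.2).
Definition actCX n d (i k : 'I_n) (v : ('I_n -> 'Z_d) * ('I_n -> 'Z_d)) :=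
  (fun l => if l == i then v.1 i - v.1 k else v.1 l,
   fun l => if l == k then v.2 k + v.2 i else v.2 l).
Definition act n d (g : gate n) (v : ('I_n -> 'Z_d) * ('I_n -> 'Z_d)) :=
  match g with GF _ => v | GS i => actS i v | @GCX _ i k _ => actCX i k v end.
Definition isF n (g : gate n) := if g is GF _ then true else false.

Lemma S_conj n d (Hd : (1 < d)%N) (od : odd d) (i : 'I_n) (a b : 'I_n -> 'Z_d) :
  exists lam : algC, Sq d i * pauli a b = lam *: pauli (actS i (a, b)).1 (actS i (a, b)).2 * Sq d i.
Proof.
exists (w ((b i * b i + b i) / 2%:R - b i * b i)).
rewrite Sq_mono !pauli_mono // scale_mono !monoM; apply: mono_ext => x //=.
rewrite !ffunE !half_w // -!wD //; congr w.
have -> : \sum_(l < n) (if l == i then a l + b l else a l) * (x l + b l) =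
   \sum_(l < n) a l * (x l + b l) + b i * (x i + b i).
  rewrite -(sum_delta (fun l => b l * (x l + b l)) i) -big_split /=.
  by apply: eq_bigr => l _; case: eqP => [->|]; rewrite ?addr0 // mulrDl.
have h2 : 2%:R * (2%:R : 'Z_d)^-1 = 1 by rewrite mulrV // unit2.
set h := (2%:R : 'Z_d)^-1 in h2 *.
set A := \sum_(l < n) _.
apply/eqP; rewrite -subr_eq0; apply/eqP.
transitivity (x i * b i * (2%:R * h - 1)); first by rewrite /h; ring.
by rewrite h2 subrr mulr0.
Qed.

Lemma CX_conj n d (Hd : (1 < d)%N) (i k : 'I_n) (ik : i != k) (a b : 'I_n -> 'Z_d) :
  CXq d i k * pauli a b = 1 *: pauli (actCX i k (a, b)).1 (actCX i k (a, b)).2 * CXq d i k.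
Proof.
rewrite CXq_mono !pauli_mono // scale_mono !monoM; apply: mono_ext => x /=.
  apply/ffunP => l; rewrite !(updE, ffunE).
  by case: eqP => _ //; ring.
rewrite !mul1r mulr1; congr w.
have E : forall l, (if l == i then a i - a k else a l) *
     ((upd x k (x i + x k)) l + (if l == k then b k + b i else b l)) =
     a l * (x l + b l) + ((if l == i then - (a k * (x i + b i)) else 0)
                          + (if l == k then a k * (x i + b i) else 0)).
  move=> l; rewrite updE; case: (eqVneq l i) => [->|li].
    by rewrite (negbTE ik) addr0; ring.
  by case: (eqVneq l k) => [->|lk]; rewrite ?addr0 ?add0r; ring.
rewrite (eq_bigr _ (fun l _ => E l)) big_split /= big_split /= !sum_delta.
by rewrite addNr addr0.
Qed.

Lemma gate_conj n d (Hd : (1 < d)%N) (od : odd d) (g : gate n) (a b : 'I_n -> 'Z_d) :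
  ~~ isF g -> exists lam : algC,
    gate_mx d g * pauli a b = lam *: pauli (act g (a, b)).1 (act g (a, b)).2 * gate_mx d g.
Proof.
case: g => //= [i|i k ik] _; first exact: S_conj.
by exists 1; exact: CX_conj.
Qed.

Lemma gate_unit n d (Hd : (1 < d)%N) (g : gate n) : ~~ isF g -> gate_mx d g \in unitmx.
Proof.
case: g => //= [i|i k ik] _.
  rewrite Sq_mono; apply: (@mono_unit _ _ id id) => // x; exact: expf_neq0 (omega_neq0 (ltnW Hd)).
rewrite CXq_mono; apply: (@mono_unit _ _ _ (fun x => upd x k (x k - x i))) => [x|x|].
- apply/ffunP => l; rewrite !updE eqxx (negbTE ik).
  by case: eqP => [->|] //; ring.
- apply/ffunP => l; rewrite !updE eqxx (negbTE ik).
  by case: eqP => [->|] //; ring.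
- move=> _; exact: oner_neq0.
Qed.

Definition act_seq n d (s : seq (gate n)) (v : ('I_n -> 'Z_d) * ('I_n -> 'Z_d)) :=
  foldr (@act n d) v s.

Lemma circuit_conj n d (Hd : (1 < d)%N) (od : odd d) (s : seq (gate n)) (a b : 'I_n -> 'Z_d) :
  all (fun g => ~~ isF g) s -> exists lam : algC,
    circuit_mx d s * pauli a b =
    lam *: pauli (act_seq s (a, b)).1 (act_seq s (a, b)).2 * circuit_mx d s.
Proof.
elim: s => [|g s IH] /=.
  by move=> _; exists 1; rewrite /circuit_mx big_nil scale1r mul1r mulr1.
case/andP => nFg /IH [lam H].
rewrite /circuit_mx big_cons -/(circuit_mx d s) -mulrA H.
case: (act_seq s (a, b)) => a1 b1 /=.
have [mu Hmu] := gate_conj Hd od a1 b1 nFg.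
exists (lam * mu).
rewrite -!mulmxE in Hmu *; by rewrite mulmxA -scalemxAr Hmu -!scalemxAl scalerA -mulmxA.
Qed.

Lemma circuit_unit n d (Hd : (1 < d)%N) (s : seq (gate n)) :
  all (fun g => ~~ isF g) s -> circuit_mx d s \in unitmx.
Proof.
elim: s => [|g s IH] /=.
  by move=> _; rewrite /circuit_mx big_nil unitmx1.
case/andP => nFg /IH H; rewrite /circuit_mx big_cons -/(circuit_mx d s).
by rewrite -mulmxE unitmx_mul H gate_unit.
Qed.

Lemma conj_final n d (M P P' : Op n d) lam :
  M \in unitmx -> M * P = lam *: P' * M -> M * P * invmx M = lam *: P'.
Proof.
move=> uM ->; by rewrite -mulrA -mulmxE mulmxV // mulmx1.
Qed.

Lemma unitZ d (Hd : prime d) (t : 'Z_d) : t != 0 -> t \is a GRing.unit.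
Proof.
move=> t0; have d1 := prime_gt1 Hd.
rewrite -(natr_Zp t) unitZpE // prime_coprime //.
have lt : (t < d)%N := leq_trans (ltn_ord t) (eq_leq (Zp_cast d1)).
apply/negP => /dvdn_leq.
have tpos : (0 < t)%N by rewrite lt0n; apply: contra t0 => /eqP H; apply/eqP/val_inj.
by move/(_ tpos); rewrite leqNgt lt.
Qed.

Definition om n d (v u : ('I_n -> 'Z_d) * ('I_n -> 'Z_d)) j := v.1 j * u.2 j - v.2 j * u.1 j.

Lemma cx_iter n d (j k : 'I_n) (kj : k != j) m (v : ('I_n -> 'Z_d) * ('I_n -> 'Z_d)) :
  let p := act_seq (nseq m (GCX kj)) v in
  [/\ p.1 j = v.1 j, p.2 j = v.2 j + m%:R * v.2 k & p.2 k = v.2 k].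
Proof.
elim: m => [|m [IH1 IH2 IH3]] /=; first by rewrite mul0r addr0.
rewrite /actCX /= (negbTE kj) eq_sym (negbTE kj) eqxx IH1 IH2 IH3.
by split => //; rewrite -natr1 mulrDl mul1r addrA.
Qed.

Lemma transfer n d (Hd : prime d) (j k : 'I_n) (kj : k != j) (a b c e : 'I_n -> 'Z_d) :
  a j * e k - b k * c j != 0 ->
  exists s, all (fun g => ~~ isF g) s /\ om (act_seq s (a, b)) (act_seq s (c, e)) j = 1.
Proof.
move=> g0; set g := a j * e k - b k * c j in g0.
set t := (1 - (a j * e j - b j * c j)) / g.
have tg : t * g = 1 - (a j * e j - b j * c j) by rewrite /t divrK ?unitZ.
clearbody t.
exists (nseq t (GCX kj)); split; first by rewrite all_nseq orbT.
have [A1 A2 A3] := cx_iter kj t (a, b).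
have [C1 C2 C3] := cx_iter kj t (c, e).
rewrite /om A1 A2 C1 C2 /= natr_Zp.
transitivity ((a j * e j - b j * c j) + t * g); first by rewrite /g; ring.
by rewrite tg addrC subrK.
Qed.

Lemma omega_pair n d (j k : 'I_n) (a b c e : 'I_n -> 'Z_d) :
  (a j * e j - b j * c j) * (a k * e k - b k * c k) =
  (a j * e k - b k * c j) * (a k * e j - b j * c k)
  + (b j * e k - b k * e j) * (a j * c k - a k * c j).
Proof. ring. Qed.

Lemma comb n d (Hd : prime d) (a b c e : 'I_n -> 'Z_d) :
  \sum_(i < n) (a i * e i - b i * c i) = 1 ->
  exists s, all (fun g => ~~ isF g) s /\
    exists j, om (act_seq s (a, b)) (act_seq s (c, e)) j = 1.
Proof.
move=> Hsum.
case: (pickP (fun j => om (a, b) (c, e) j == 1)) => [j /eqP Hj | nA].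
  by exists [::]; split => //; exists j.
case: (pickP (fun p : 'I_n * 'I_n => (p.1 != p.2) && (a p.1 * e p.2 - b p.2 * c p.1 != 0)))
  => [[j k] /andP [/= jk g0] | nB].
  have kj : k != j by rewrite eq_sym.
  have [s [Hs Hj]] := transfer Hd kj g0.
  by exists s; split => //; exists j.
case: (pickP (fun p : 'I_n * 'I_n => (p.1 != p.2) && (b p.1 * e p.2 - b p.2 * e p.1 != 0)))
  => [[j k] /andP [/= jk b0] | nC].
  have kj : k != j by rewrite eq_sym.
  have g00 : a j * e k - b k * c j = 0.
    by apply/eqP; move: (nB (j, k)); rewrite /= jk /= => /negbFE.
  have g0 : (actS j (a, b)).1 j * (actS j (c, e)).2 k - (actS j (a, b)).2 k * (actS j (c, e)).1 j != 0.
    rewrite /= eqxx.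
    have -> : (a j + b j) * e k - b k * (c j + e j) = (a j * e k - b k * c j) + (b j * e k - b k * e j) by ring.
    by rewrite g00 add0r.
  have [s [Hs Hj]] := transfer Hd kj g0.
  exists (s ++ [:: GS j]); split; first by rewrite all_cat Hs.
  by exists j; rewrite /act_seq !foldr_cat.
exfalso.
have key : forall j k, j != k -> om (a, b) (c, e) j * om (a, b) (c, e) k = 0.
  move=> j k jk; rewrite /om /= omega_pair.
  have kj : k != j by rewrite eq_sym.
  move: (nB (j, k)) (nB (k, j)) (nC (j, k)); simpl; rewrite jk kj /=.
  by move=> /negbFE/eqP -> /negbFE/eqP -> /negbFE/eqP ->; rewrite !mul0r addr0.
have [j Hj] : exists j, om (a, b) (c, e) j != 0.
  apply/existsP; apply: contraT; rewrite negb_exists => /forallP H0.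
  move: Hsum; rewrite big1 => [/eqP|i _]; first by rewrite eq_sym oner_eq0.
  by apply/eqP; move: (H0 i); rewrite negbK.
have : \sum_(i < n) (a i * e i - b i * c i) = om (a, b) (c, e) j.
  rewrite (bigD1 j) //= big1 ?addr0 // => k kj.
  have := key j k; rewrite eq_sym kj => /(_ isT) H.
  by rewrite /om /= in H; rewrite -[LHS](mulKr (unitZ Hd Hj)) /om /= H mulr0.
move=> E; move: (nA j); rewrite -E. rewrite Hsum eqxx. done.
Qed.

Unset Implicit Arguments.

Theorem lemma8 (d n : nat) (Hd : prime d) (Hodd : odd d) (Hn : (0 < n)%N)
  (k l : nat) (a b c e : 'I_n -> 'Z_d) :
  \sum_(i < n) (a i * e i - b i * c i) = 1 ->
  let P := omega d ^+ k *: pauli a b in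
  let Q := omega d ^+ l *: pauli c e in
  exists (s : seq (gate n)) (a' b' c' e' : 'I_n -> 'Z_d) (lam mu : algC),
    let M := circuit_mx d s in
    [/\ M * P * invmx M = lam *: pauli a' b',
        M * Q * invmx M = mu *: pauli c' e' &
        exists j : 'I_n, a' j * e' j - b' j * c' j = 1].
Proof.
move=> Hsum P Q.
have d1 := prime_gt1 Hd.
have [s [Hs [j Hj]]] := comb Hd Hsum.
have [lam1 H1] := circuit_conj d1 Hodd a b Hs.
have [lam2 H2] := circuit_conj d1 Hodd c e Hs.
have uM := circuit_unit d1 Hs.
exists s, (act_seq s (a, b)).1, (act_seq s (a, b)).2,
          (act_seq s (c, e)).1, (act_seq s (c, e)).2,
          (omega d ^+ k * lam1), (omega d ^+ l * lam2).
rewrite -mulmxE in H1 H2.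
split; last by exists j.
- apply: conj_final => //; rewrite /P -!mulmxE -scalemxAr H1.
  by rewrite -!scalemxAl scalerA.
- apply: conj_final => //; rewrite /Q -!mulmxE -scalemxAr H2.
  by rewrite -!scalemxAl scalerA.
Qed.
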